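(* Let $H(q,p)=\tfrac12\langle B(q)p,p\rangle+V(q)$ on $U\times\mathbb R^2$, $U\subset\mathbb R^2$ open containing $(0,0)$, with $B$ smooth symmetric positive definite, $V$ smooth with a nondegenerate maximum at $(0,0)$, $V(0,0)=0$, and $\frac{\partial B}{\partial q_2}(q_1,0)=0$. Let $\gamma$ be an orbit in the unstable manifold of $O=(0,0,0,0)$ whose part in $U\times\mathbb R^2$ (outgoing part) is $q_1=q_1^0(t)$, $q_2=0$ for $t\le t_1$, with $q_1^0$ increasing, positive and tending to $0$ as $t\to-\infty$, and write it as $p_1=S_0'(q_1)$, $p_2=S_1(q_1)$ for $q_1\in(0,q_1^0(t_1)]$. Let $V(q)=V_0(q_1)+V_1(q_1)q_2+O(q_2^2)$, $B(q_1,0)=B_0(q_1)=\begin{pmatrix}b_{110}&b_{120}\\ b_{120}&b_{220}\end{pmatrix}$ and $\beta(q_1)=\det B_0(q_1)/b_{220}(q_1)$. Then: (a) the dynamics along the outgoing part of $\gamma$ is given by $\dot q_1=\beta(q_1)S_0'(q_1)$; (b) $S_0'(q_1)=\sqrt{-2V_0(q_1)/\beta(q_1)}$ and $S_1(q_1)=-\frac{b_{120}(q_1)}{b_{220}(q_1)}S_0'(q_1)$; (c) $S_1'(q_1)\,\beta(q_1)\,S_0'(q_1)=-V_1(q_1)$.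
   Context: Smooth means $C^r$, $r\ge2$, or analytic. Hamilton's equations: $\dot q=B(q)p$, $\dot p=-\tfrac12\partial_q\langle B(q)p,p\rangle-\nabla V(q)$. *)

(* Defs.v *)
From Stdlib Require Import Reals.
From Coquelicot Require Import Coquelicot.
Open Scope R_scope.

Definition pd1 (f : R -> R -> R) (x y : R) : R := Derive (fun s => f s y) x.
Definition pd2 (f : R -> R -> R) (x y : R) : R := Derive (fun s => f x s) y.

Definition C1_on (U : R -> R -> Prop) (f : R -> R -> R) : Prop :=
  forall x y, U x y ->
    continuity_2d_pt f x y /\
    ex_derive (fun s => f s y) x /\ ex_derive (fun s => f x s) y /\
    continuity_2d_pt (pd1 f) x y /\ continuity_2d_pt (pd2 f) x y.

(* C^2 on U ("smooth" = C^r, r >= 2; C^2 is the weakest case). *)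
Definition C2_on (U : R -> R -> Prop) (f : R -> R -> R) : Prop :=
  C1_on U f /\ C1_on U (pd1 f) /\ C1_on U (pd2 f).

Definition pos_def_at (b11 b12 b22 : R -> R -> R) (x y : R) : Prop :=
  forall u v, (u, v) <> (0, 0) ->
    u * u * b11 x y + 2 * u * v * b12 x y + v * v * b22 x y > 0.

Definition nondeg_max_at0 (V : R -> R -> R) : Prop :=
  (exists eps, eps > 0 /\
     forall x y, Rabs x < eps -> Rabs y < eps -> V x y <= V 0 0) /\
  pd1 (pd1 V) 0 0 * pd2 (pd2 V) 0 0 - pd2 (pd1 V) 0 0 * pd1 (pd2 V) 0 0 <> 0.

(* Hamilton's equations for H = 1/2 <B(q)p,p> + V(q) at time t. *)
Definition hamilton_at (b11 b12 b22 V : R -> R -> R)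
    (q1 q2 p1 p2 : R -> R) (t : R) : Prop :=
  let x := q1 t in let y := q2 t in let a := p1 t in let c := p2 t in
  is_derive q1 t (b11 x y * a + b12 x y * c) /\
  is_derive q2 t (b12 x y * a + b22 x y * c) /\
  is_derive p1 t (- / 2 * (pd1 b11 x y * a * a + 2 * pd1 b12 x y * a * c
                           + pd1 b22 x y * c * c) - pd1 V x y) /\
  is_derive p2 t (- / 2 * (pd2 b11 x y * a * a + 2 * pd2 b12 x y * a * c
                           + pd2 b22 x y * c * c) - pd2 V x y).

(* V(q) = V0(q1) + V1(q1) q2 + O(q2^2) *)
Definition V0 (V : R -> R -> R) (x : R) : R := V x 0.
Definition V1 (V : R -> R -> R) (x : R) : R := pd2 V x 0.

Definition beta (b11 b12 b22 : R -> R -> R) (x : R) : R :=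
  (b11 x 0 * b22 x 0 - b12 x 0 * b12 x 0) / b22 x 0.

(* Main.v *)
Require Import Defs.
From Stdlib Require Import Reals.
From Coquelicot Require Import Coquelicot.
From Stdlib Require Import Lra Psatz.
Open Scope R_scope.



Lemma energy_deriv (B11 B12 B22 W q p c : R -> R) t (dB11 dB12 dB22 dW dq dp dc : R) :
  is_derive B11 (q t) dB11 -> is_derive B12 (q t) dB12 -> is_derive B22 (q t) dB22 ->
  is_derive W (q t) dW -> is_derive q t dq -> is_derive p t dp -> is_derive c t dc ->
  dq = B11 (q t) * p t + B12 (q t) * c t ->
  B12 (q t) * p t + B22 (q t) * c t = 0 ->
  dp = - / 2 * (dB11 * p t * p t + 2 * dB12 * p t * c t + dB22 * c t * c t) - dW ->
  is_derive (fun s => /2*(B11 (q s) * p s * p s + 2*B12 (q s)*p s*c s + B22 (q s) * c s * c s) + W (q s)) t 0.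
Proof.
  intros H1 H2 H3 H4 H5 H6 H7 E1 E2 E3.
  auto_derive.
  - repeat split; eexists; eassumption.
  - repeat match goal with |- context [Derive ?f ?x] =>
      erewrite (is_derive_unique f x) by eassumption end.
    transitivity (dc * (B12 (q t) * p t + B22 (q t) * c t)).
    + rewrite E3, E1. set (P := p t); set (C := c t); set (Q := q t); set (b1 := B11 Q); set (b2 := B12 Q); set (b3 := B22 Q). field.
    + rewrite E2; ring.
Qed.

Lemma deriv_left_const (f : R -> R) (t l : R) :
  is_derive f t l -> (forall h, h < 0 -> f (t + h) = f t) -> l = 0.
Proof.
  intros Hd Hc. apply is_derive_Reals in Hd.
  destruct (Req_dec l 0) as [|Hn]; auto.
  assert (He : 0 < Rabs l) by (apply Rabs_pos_lt; auto).
  destruct (Hd (Rabs l) He) as [d Hdl].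
  assert (Hh : - (d/2) <> 0) by (pose proof (cond_pos d); lra).
  assert (Hh2 : Rabs (- (d/2)) < d) by (pose proof (cond_pos d); rewrite Rabs_Ropp, Rabs_pos_eq; lra).
  specialize (Hdl _ Hh Hh2). rewrite Hc in Hdl by (pose proof (cond_pos d); lra).
  replace ((f t - f t) / - (d / 2) - l) with (- l) in Hdl by (field; pose proof (cond_pos d); lra).
  rewrite Rabs_Ropp in Hdl. lra.
Qed.

Lemma deriv_left_incr (f : R -> R) (t l : R) :
  is_derive f t l -> (forall h, h < 0 -> f (t + h) < f t) -> 0 <= l.
Proof.
  intros Hd Hc. apply is_derive_Reals in Hd.
  destruct (Rle_dec 0 l) as [|Hn]; auto. exfalso.
  assert (He : 0 < - l) by lra.
  destruct (Hd (- l) He) as [d Hdl].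
  pose proof (cond_pos d) as Hdp.
  assert (Hh : - (d/2) <> 0) by lra.
  assert (Hh2 : Rabs (- (d/2)) < d) by (rewrite Rabs_Ropp, Rabs_pos_eq; lra).
  specialize (Hdl _ Hh Hh2). assert (Hneg : - (d/2) < 0) by lra. specialize (Hc _ Hneg).
  assert (Hq : 0 < (f (t + - (d / 2)) - f t) / - (d / 2)).
  { replace ((f (t + - (d / 2)) - f t) / - (d / 2)) with ((f t - f (t + - (d/2))) / (d/2)) by (field; lra).
    apply Rdiv_lt_0_compat; lra. }
  apply Rabs_lt_between in Hdl. lra.
Qed.

Lemma deriv_cont (f : R -> R) t l : is_derive f t l -> continuity_pt f t.
Proof.
  intros H. apply derivable_continuous_pt. apply is_derive_Reals in H.
  exists l. exact H.
Qed.

Lemma lim_mult_fin (f g : R -> R) x (a b : R) :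
  is_lim f x a -> is_lim g x b -> is_lim (fun y => f y * g y) x (a * b).
Proof.
  intros Hf Hg. apply (is_lim_mult f g x a b Hf Hg). exact I.
Qed.

Lemma lim_comp0 (f : R -> R -> R) (q : R -> R) :
  continuity_2d_pt f 0 0 -> is_lim q m_infty 0 ->
  is_lim (fun t => f (q t) 0) m_infty (f 0 0).
Proof.
  intros Hc Hq. apply is_lim_spec. intros eps.
  destruct (Hc eps) as [d Hd].
  apply is_lim_spec in Hq. destruct (Hq d) as [M HM].
  exists M. intros y Hy. apply Hd. apply HM; auto.
  rewrite Rminus_0_r, Rabs_R0. apply cond_pos.
Qed.

Theorem proposition2
  (U : R -> R -> Prop) (b11 b12 b22 V : R -> R -> R)
  (q1 q2 p1 p2 : R -> R) (t1 : R) (dS0 S1 : R -> R)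
  (* U open, containing (0,0) *)
  (HUopen : open (fun z : R * R => U (fst z) (snd z)))
  (HU0 : U 0 0)
  (* B smooth, symmetric (by construction), positive definite on U *)
  (Hb11 : C2_on U b11) (Hb12 : C2_on U b12) (Hb22 : C2_on U b22)
  (HBpd : forall x y, U x y -> pos_def_at b11 b12 b22 x y)
  (* V smooth, nondegenerate maximum at (0,0), V(0,0) = 0 *)
  (HV : C2_on U V) (HVmax : nondeg_max_at0 V) (HV00 : V 0 0 = 0)
  (* dB/dq2 (q1,0) = 0 *)
  (HdB : forall x, U x 0 ->
     pd2 b11 x 0 = 0 /\ pd2 b12 x 0 = 0 /\ pd2 b22 x 0 = 0)
  (* gamma: solution of Hamilton's equations, outgoing part t <= t1 in U x R^2 *)
  (Hsol : forall t, t <= t1 -> hamilton_at b11 b12 b22 V q1 q2 p1 p2 t)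
  (HinU : forall t, t <= t1 -> U (q1 t) (q2 t))
  (* gamma lies in the unstable manifold of O = (0,0,0,0) *)
  (Hlq1 : is_lim q1 m_infty (Finite 0)) (Hlq2 : is_lim q2 m_infty (Finite 0))
  (Hlp1 : is_lim p1 m_infty (Finite 0)) (Hlp2 : is_lim p2 m_infty (Finite 0))
  (* outgoing part: q1 = q1^0(t) increasing and positive, q2 = 0 *)
  (Hq2 : forall t, t <= t1 -> q2 t = 0)
  (Hq1pos : forall t, t <= t1 -> 0 < q1 t)
  (Hq1inc : forall s t, s < t -> t <= t1 -> q1 s < q1 t)
  (* gamma written as p1 = S0'(q1), p2 = S1(q1) *)
  (HS0 : forall t, t <= t1 -> p1 t = dS0 (q1 t))
  (HS1 : forall t, t <= t1 -> p2 t = S1 (q1 t))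
  (HS1d : forall x, 0 < x < q1 t1 -> ex_derive S1 x) :
  (* (a) *)
  (forall t, t <= t1 ->
     is_derive q1 t (beta b11 b12 b22 (q1 t) * dS0 (q1 t))) /\
  (* (b) *)
  (forall x, 0 < x <= q1 t1 ->
     dS0 x = sqrt (- 2 * V0 V x / beta b11 b12 b22 x) /\
     S1 x = - (b12 x 0 / b22 x 0) * dS0 x) /\
  (* (c) *)
  (forall x, 0 < x < q1 t1 ->
     Derive S1 x * beta b11 b12 b22 x * dS0 x = - V1 V x).
Proof.
  assert (Bpos : forall x, U x 0 -> 0 < b22 x 0 /\ 0 < b11 x 0 * b22 x 0 - b12 x 0 * b12 x 0).
  { intros x Hx. pose proof (HBpd x 0 Hx) as P. unfold pos_def_at in P.
    assert (H22 : 0 < b22 x 0).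
    { specialize (P 0 1). assert (N : (0, 1) <> (0, 0)) by (intro E; inversion E; lra).
      specialize (P N). lra. }
    split; auto.
    specialize (P (b22 x 0) (- b12 x 0)).
    assert (N : (b22 x 0, - b12 x 0) <> (0, 0)) by (intro E; inversion E; lra).
    specialize (P N).
    assert (E : b22 x 0 * b22 x 0 * b11 x 0 + 2 * b22 x 0 * - b12 x 0 * b12 x 0 +
                - b12 x 0 * - b12 x 0 * b22 x 0
                = b22 x 0 * (b11 x 0 * b22 x 0 - b12 x 0 * b12 x 0)) by ring.
    rewrite E in P. nra. }
  assert (HUt : forall t, t <= t1 -> U (q1 t) 0).
  { intros t Ht. rewrite <- (Hq2 t Ht). auto. }
  assert (Hq2d : forall t, t <= t1 -> b12 (q1 t) 0 * p1 t + b22 (q1 t) 0 * p2 t = 0).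
  { intros t Ht. pose proof (Hsol t Ht) as Hs. unfold hamilton_at in Hs. cbv zeta in Hs.
    rewrite (Hq2 t Ht) in Hs. destruct Hs as [_ [Hs _]].
    apply (deriv_left_const q2 t _ Hs). intros h Hh.
    rewrite (Hq2 t Ht), (Hq2 (t + h)) by lra. reflexivity. }
  assert (Hc : forall t, t <= t1 -> p2 t = - (b12 (q1 t) 0 / b22 (q1 t) 0) * p1 t).
  { intros t Ht. pose proof (Hq2d t Ht). destruct (Bpos _ (HUt t Ht)).
    field_simplify; [|lra]. apply (Rmult_eq_reg_l (b22 (q1 t) 0)); [|lra].
    field_simplify; lra. }
  assert (Ha : forall t, t <= t1 -> is_derive q1 t (beta b11 b12 b22 (q1 t) * p1 t)).
  { intros t Ht. pose proof (Hsol t Ht) as Hs. unfold hamilton_at in Hs. cbv zeta in Hs.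
    rewrite (Hq2 t Ht) in Hs. destruct Hs as [Hs _].
    replace (beta b11 b12 b22 (q1 t) * p1 t) with
      (b11 (q1 t) 0 * p1 t + b12 (q1 t) 0 * p2 t); auto.
    rewrite (Hc t Ht). unfold beta. destruct (Bpos _ (HUt t Ht)). field. lra. }
  assert (Dpd : forall f x, C2_on U f -> U x 0 -> is_derive (fun s => f s 0) x (pd1 f x 0)).
  { intros f x [Cf _] Hx. destruct (Cf x 0 Hx) as [_ [Hex _]].
    unfold pd1. apply Derive_correct. exact Hex. }
  set (E := fun s => /2*(b11 (q1 s) 0 * p1 s * p1 s + 2*b12 (q1 s) 0*p1 s*p2 s
                         + b22 (q1 s) 0 * p2 s * p2 s) + V (q1 s) 0).
  assert (HEd : forall t, t <= t1 -> is_derive E t 0).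
  { intros t Ht. pose proof (Hsol t Ht) as Hs. unfold hamilton_at in Hs. cbv zeta in Hs.
    rewrite (Hq2 t Ht) in Hs. destruct Hs as [H1 [_ [H3 H4]]].
    apply (energy_deriv (fun s => b11 s 0) (fun s => b12 s 0) (fun s => b22 s 0)
             (fun s => V s 0) q1 p1 p2 t (pd1 b11 (q1 t) 0) (pd1 b12 (q1 t) 0)
             (pd1 b22 (q1 t) 0) (pd1 V (q1 t) 0) _ _ _ (Dpd _ _ Hb11 (HUt t Ht)) (Dpd _ _ Hb12 (HUt t Ht)) (Dpd _ _ Hb22 (HUt t Ht)) (Dpd _ _ HV (HUt t Ht)) H1 H3 H4); auto. }

  assert (HEconst : forall t, t <= t1 -> E t = E t1).
  { intros t Ht. destruct (Req_dec t t1) as [->|Hne]; auto.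
    destruct (MVT_gen E t t1 (fun _ => 0)) as [z [_ Hz]].
    - intros x Hx. rewrite Rmax_right in Hx by lra. apply HEd. lra.
    - intros x Hx. rewrite Rmax_right in Hx by lra. apply (deriv_cont E x 0). apply HEd. lra.
    - lra. }
  assert (HElim : is_lim E m_infty 0).
  { pose proof (proj1 Hb11) as C11; pose proof (proj1 Hb12) as C12;
    pose proof (proj1 Hb22) as C22; pose proof (proj1 HV) as CV.
    destruct (C11 0 0 HU0) as [K11 _]. destruct (C12 0 0 HU0) as [K12 _].
    destruct (C22 0 0 HU0) as [K22 _]. destruct (CV 0 0 HU0) as [KV _].
    assert (L : is_lim E m_infty (/2*(b11 0 0*0*0 + 2*b12 0 0*0*0 + b22 0 0*0*0) + V 0 0)).
    { unfold E. apply is_lim_plus'.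
      - apply lim_mult_fin. apply is_lim_const.
        apply is_lim_plus'. apply is_lim_plus'.
        + apply lim_mult_fin. apply lim_mult_fin. apply lim_comp0; auto. auto. auto.
        + apply lim_mult_fin. apply lim_mult_fin. apply lim_mult_fin. apply is_lim_const.
          apply lim_comp0; auto. auto. auto.
        + apply lim_mult_fin. apply lim_mult_fin. apply lim_comp0; auto. auto. auto.
      - apply lim_comp0; auto. }
    replace 0 with (/2*(b11 0 0*0*0 + 2*b12 0 0*0*0 + b22 0 0*0*0) + V 0 0) at 1; auto.
    rewrite HV00. ring. }
  assert (HE0 : forall t, t <= t1 -> E t = 0).
  { intros t Ht. rewrite (HEconst t Ht).
    assert (L : is_lim E m_infty (E t1)).
    { apply (is_lim_ext_loc (fun _ => E t1)). exists t1. intros y Hy.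
      symmetry. apply HEconst. lra. apply is_lim_const. }
    apply is_lim_unique in L. apply is_lim_unique in HElim. rewrite L in HElim.
    injection HElim. auto. }
  assert (Hen : forall t, t <= t1 ->
            / 2 * beta b11 b12 b22 (q1 t) * p1 t * p1 t + V0 V (q1 t) = 0).
  { intros t Ht. rewrite <- (HE0 t Ht). unfold E, V0. rewrite (Hc t Ht). unfold beta.
    destruct (Bpos _ (HUt t Ht)). field. lra. }
  assert (Hbeta : forall t, t <= t1 -> 0 < beta b11 b12 b22 (q1 t)).
  { intros t Ht. destruct (Bpos _ (HUt t Ht)). unfold beta. apply Rdiv_lt_0_compat; lra. }
  assert (Hp1 : forall t, t <= t1 -> 0 <= p1 t).
  { intros t Ht. assert (0 <= beta b11 b12 b22 (q1 t) * p1 t).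
    { apply (deriv_left_incr q1 t _ (Ha t Ht)). intros h Hh. apply Hq1inc; lra. }
    pose proof (Hbeta t Ht). nra. }
  assert (Surj : forall x, 0 < x <= q1 t1 -> exists t, t <= t1 /\ q1 t = x).
  { intros x Hx. destruct (Req_dec x (q1 t1)) as [->|Hne].
    { exists t1. split; auto; lra. }
    apply is_lim_spec in Hlq1. destruct (Hlq1 (mkposreal x (proj1 Hx))) as [M HM].
    set (s := Rmin (M - 1) (t1 - 1)).
    assert (Hs1 : s < t1) by (unfold s; pose proof (Rmin_r (M-1) (t1-1)); lra).
    assert (Hs2 : s < M) by (unfold s; pose proof (Rmin_l (M-1) (t1-1)); lra).
    specialize (HM s Hs2). simpl in HM. rewrite Rminus_0_r in HM.
    pose proof (Rle_abs (q1 s)).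
    destruct (Ranalysis5.IVT_interv (fun u => q1 u - x) s t1) as [z [Hz Hz']].
    - intros a Ha'. apply (continuity_pt_minus q1 (fun _ => x)).
      apply (deriv_cont _ a _ (Ha a ltac:(lra))).
      apply continuity_pt_const. intros u v. reflexivity.
    - exact Hs1.
    - simpl. lra.
    - simpl. lra.
    - exists z. split. lra. simpl in Hz'. lra. }
  split; [|split].
  - intros t Ht. rewrite <- (HS0 t Ht). apply Ha; auto.
  - intros x Hx. destruct (Surj x Hx) as [t [Ht <-]]. split.
    + rewrite <- (HS0 t Ht). pose proof (Hen t Ht). pose proof (Hbeta t Ht).
      replace (- 2 * V0 V (q1 t) / beta b11 b12 b22 (q1 t)) with (p1 t * p1 t).
      * rewrite sqrt_square; auto.
      * field_simplify; [|lra]. apply (Rmult_eq_reg_r (beta b11 b12 b22 (q1 t))); [|lra].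
        field_simplify; lra.
    + rewrite <- (HS1 t Ht), <- (HS0 t Ht). apply Hc; auto.
  - intros x Hx. destruct (Surj x (conj (proj1 Hx) (Rlt_le _ _ (proj2 Hx)))) as [t [Ht <-]].
    assert (Htl : t < t1).
    { destruct (Req_dec t t1) as [->|]; [lra|lra]. }
    pose proof (Hsol t Ht) as Hs. unfold hamilton_at in Hs. cbv zeta in Hs.
    rewrite (Hq2 t Ht) in Hs. destruct Hs as [_ [_ [_ H4]]].
    destruct (HdB _ (HUt t Ht)) as [Z1 [Z2 Z3]]. rewrite Z1, Z2, Z3 in H4.
    assert (H5 : is_derive (fun s => S1 (q1 s)) t
                  (scal (beta b11 b12 b22 (q1 t) * p1 t) (Derive S1 (q1 t)))).
    { exact (is_derive_comp S1 q1 t _ _ (Derive_correct _ _ (HS1d _ Hx)) (Ha t Ht)). }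
    assert (H6 : is_derive p2 t
                  (scal (beta b11 b12 b22 (q1 t) * p1 t) (Derive S1 (q1 t)))).
    { apply (is_derive_ext_loc (fun s => S1 (q1 s))); auto.
      assert (Hp : 0 < t1 - t) by lra.
      exists (mkposreal _ Hp). intros y Hy. change (Rabs (y - t) < t1 - t) in Hy.
      apply Rabs_lt_between' in Hy. symmetry. apply HS1. lra. }
    apply is_derive_unique in H4. apply is_derive_unique in H6. rewrite H4 in H6.
    change (scal ?a ?b) with (a * b) in H6.
    rewrite <- (HS0 t Ht). unfold V1. lra.
Qed.
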